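(* Let $q$ be a prime power with $q>63$ and let $\mathbb D$ be a $3$-$(q+1,q-4,(q-4)(q-5)(q-6)/60)$ design. Then $\dim_q\mathbb D\ge 4$.
   Context: A $t$-$(v,k,\lambda)$ design is a set of $v$ points with a set of $k$-subsets (blocks) such that every $t$ points lie in exactly $\lambda>0$ blocks. The dimension $\dim_q\mathbb D$ of a design $\mathbb D$ over $\mathrm{GF}(q)$ is the minimum of the ranks over $\mathrm{GF}(q)$ of all matrices obtained from the $(0,1)$ block-by-point incidence matrix of $\mathbb D$ by replacing each entry $1$ with an arbitrary nonzero element of $\mathrm{GF}(q)$; equivalently, the minimum dimension of a linear code over $\mathrm{GF}(q)$ of length $v$ in which every block of $\mathbb D$ is the support of some codeword. *)

(* Defs.v *)
From mathcomp Require Import all_boot all_order all_algebra all_field.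
Set Implicit Arguments. Unset Strict Implicit. Unset Printing Implicit Defensive.
Import GRing.Theory.
Local Open Scope ring_scope.

Definition is_design (t v k lam : nat) (Bs : {set {set 'I_v}}) : Prop :=
  [/\ (forall B, B \in Bs -> #|B| = k),
      (0 < lam)%N &
      (forall T : {set 'I_v}, #|T| = t ->
         #|[set B in Bs | T \subset B]| = lam)].

Definition block (v : nat) (Bs : {set {set 'I_v}}) (i : 'I_#|Bs|) : {set 'I_v} :=
  @enum_val _ (mem Bs) i.

(* M is obtained from the block-by-point incidence matrix by replacing each
   entry 1 with an arbitrary nonzero element of F (and keeping 0s). *)
Definition incidence_like (F : fieldType) (v : nat) (Bs : {set {set 'I_v}})
  (M : 'M[F]_(#|Bs|, v)) : bool :=
  [forall i, forall j, (M i j != 0) == (j \in block i)].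

(* dim_q D: minimum rank over all such matrices (the set is nonempty:
   the incidence matrix itself qualifies; default v is an upper bound). *)
Definition dim_design (F : finFieldType) (v : nat) (Bs : {set {set 'I_v}}) : nat :=
  \big[minn/v]_(M : 'M[F]_(#|Bs|, v) | incidence_like M) \rank M.

(* Main.v *)
Require Import Defs.
From mathcomp Require Import all_boot all_order all_algebra all_field.
From mathcomp Require Import zify.
Set Implicit Arguments. Unset Strict Implicit. Unset Printing Implicit Defensive.
Import GRing.Theory.

Lemma count_blocks v k lam (Bs : {set {set 'I_v}}) :
  @is_design 3 v k lam Bs -> (#|Bs| * 'C(k, 3) = lam * 'C(v, 3))%N.
Proof.
case=> Hk _ Hl.
have E1 : (\sum_(B in Bs) \sum_(T : {set 'I_v} | #|T| == 3) (T \subset B : nat)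
   = #|Bs| * 'C(k, 3))%N.
  rewrite -sum1_card big_distrl /=; apply: eq_bigr => B HB.
  rewrite mul1n -(Hk B HB) -cards_draws -sum1dep_card big_mkcond [in RHS]big_mkcond /=.
  apply: eq_bigr => T _.
  by case: (T \subset B); case: (#|T| == 3).
have E2 : (\sum_(T : {set 'I_v} | #|T| == 3) \sum_(B in Bs) (T \subset B : nat)
   = lam * 'C(v, 3))%N.
  rewrite -[v in 'C(v, _)]card_ord -card_draws -sum1dep_card big_distrr /=.
  apply: eq_bigr => T /eqP HT.
  rewrite muln1 -(Hl T HT) -sum1dep_card big_mkcond [in RHS]big_mkcond /=.
  apply: eq_bigr => B _.
  by case: (T \subset B); case: (B \in Bs).
by rewrite -E1 -E2 exchange_big.
Qed.
Local Open Scope ring_scope.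

Lemma rank_bound (F : finFieldType) v (Bs : {set {set 'I_v}}) (M : 'M[F]_(#|Bs|, v)) :
  incidence_like M -> (forall i, @block v Bs i != set0) ->
  ((#|F| - 1) * #|Bs| <= #|F| ^ \rank M)%N.
Proof.
move=> /forallP HM Hne.
pose f (p : F * 'I_#|Bs|) := (p.1 *: row p.2 M) *m pinvmx (row_base M).
have Hf p : f p *m row_base M = p.1 *: row p.2 M.
  rewrite mulmxKpV //.
  by rewrite eq_row_base scalemx_sub // row_sub.
pose D := setX [set~ (0 : F)] [set: 'I_#|Bs|].
have injf : {in D &, injective f}.
  move=> [c i] [c' j]; rewrite !inE /= !andbT => Hc Hc' Hfe.
  have E : c *: row i M = c' *: row j M by rewrite -(Hf (c, i)) -(Hf (c', j)) Hfe.
  have Hij : i = j.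
    apply: enum_val_inj; apply/setP => x.
    have := congr1 (fun u : 'rV_v => u 0 x) E.
    rewrite !mxE => E2.
    move: (HM i) (HM j) => /forallP /(_ x) /eqP <- /forallP /(_ x) /eqP <-.
    have := congr1 (fun a => a != 0) E2; rewrite /= !mulf_eq0 (negbTE Hc) (negbTE Hc') /=.
    by move=> ->.
  subst j; congr (_, _).
  case: (set0Pn _ (Hne i)) => x Hx.
  have := congr1 (fun u : 'rV_v => u 0 x) E; rewrite !mxE => E2.
  have Hm : M i x != 0 by move: (HM i) => /forallP /(_ x) /eqP ->.
  by apply: (mulIf Hm).
have -> : ((#|F| - 1) * #|Bs| = #|D|)%N.
  by rewrite cardsX cardsT cardsC1 card_ord subn1.
rewrite -(card_in_imset injf).
apply: leq_trans (max_card _) _.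
by rewrite card_mx mul1n.
Qed.
Local Close Scope ring_scope.
Lemma bin3 n : ('C(n, 3) * 6 = n * (n - 1) * (n - 2))%N.
Proof.
have := bin_ffact n 3. rewrite /= !ffactnS ffactn0 => ->.
case: n => [|[|[|n]]] //=; rewrite ?subn1 ?subn2 /=; lia.
Qed.
Lemma arith q b lam : (63 < q)%N -> (60 * lam = (q - 4) * (q - 5) * (q - 6))%N ->
  (b * 'C(q - 4, 3) = lam * 'C(q.+1, 3))%N -> ((q - 1) * b <= q ^ 3)%N -> False.
Proof.
move=> Hq Hl Hb Hr.
have h1 := bin3 (q - 4). have h2 := bin3 q.+1.
have Hk : (0 < 'C(q - 4, 3))%N by rewrite bin_gt0; lia.
have E : (10 * b = 'C(q.+1, 3))%N.
  have h3 : ('C(q - 4, 3) = 10 * lam)%N by lia.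
  rewrite h3 in Hb Hk.
  have Hl0 : (0 < lam)%N by lia.
  apply/eqP; rewrite -(eqn_pmul2l Hl0); apply/eqP.
  rewrite -Hb; lia.
have E6 : (60 * b = (q + 1) * q * (q - 1))%N.
  have : ('C(q.+1, 3) * 6 = q.+1 * (q.+1 - 1) * (q.+1 - 2))%N by exact: h2.
  rewrite -E. lia.
have : ((q - 1) * (60 * b) <= 60 * q ^ 3)%N by lia.
rewrite E6 => H.
have Hq3 : (q ^ 3 = q * q * q)%N by rewrite !expnS expn0 muln1 mulnA.
rewrite Hq3 in H. clear -Hq H.
have [p Ep] : exists p, q = (p + 64)%N by exists (q - 64)%N; lia.
subst q.
have E1 : (p + 64 - 1 = p + 63)%N by lia.
rewrite E1 in H.
nia.
Qed.

Theorem theorem30 (F : finFieldType) (lam : nat)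
  (Bs : {set {set 'I_(#|F|.+1)}}) :
  (63 < #|F|)%N ->
  (60 * lam = (#|F| - 4) * (#|F| - 5) * (#|F| - 6))%N ->
  @is_design 3 (#|F|.+1) (#|F| - 4) lam Bs ->
  (4 <= dim_design F Bs)%N.
Proof.
move=> Hq Hl Hd.
have Hb := count_blocks Hd.
case: Hd => Hk _ _.
have Hne : forall i, @block _ Bs i != set0.
  move=> i; rewrite -card_gt0 (Hk _ (enum_valP i)); lia.
rewrite /dim_design.
apply: (big_ind (fun x => 4 <= x)%N).
- lia.
- by move=> x y hx hy; rewrite leq_min hx hy.
move=> M HM.
rewrite leqNgt; apply/negP => Hr.
have H1 := rank_bound HM Hne.
apply: (arith Hq Hl Hb).
apply: (leq_trans H1).
apply: leq_pexp2l; lia.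
Qed.
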